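(* Let $c$ be a cost function on $(\mathbb{R}^n)^N$, $\alpha_i>0$, and $(\Phi_1,\dots,\Phi_N)$ an admissible tuple with $0<\int e^{-\alpha_i\Phi_i}dx<\infty$ for all $i$. Let $\mu_i=e^{-\alpha_i\Phi_i(x_i)}dx_i/\int e^{-\alpha_i\Phi_i}dx_i$ and $d(x)=\sum_{i}\Phi_i(x_i)-c(x)$. Assume that for every tuple of probability measures $\nu_1,\dots,\nu_N$ on $\mathbb{R}^n$, $$K^{\min}_d(\nu_1,\dots,\nu_N)\le\sum_{i=1}^N\frac1{\alpha_i}\mathrm{Ent}_{\mu_i}(\nu_i).$$ Then $\prod_i(\int e^{-\alpha_iV_i}dx)^{1/\alpha_i}\le\prod_i(\int e^{-\alpha_i\Phi_i}dx)^{1/\alpha_i}$ for every admissible tuple $(V_i)$ with $0<\int e^{-\alpha_iV_i}dx<\infty$ and $V_i,\Phi_i\in L^1(\nu_i)$, where $\nu_i=e^{-\alpha_iV_i}dx/\int e^{-\alpha_iV_i}dx$; i.e. $(\Phi_i)$ maximizes the functional $\mathcal{BS}_{\alpha,m}$ with Lebesgue reference measures $m_i=dx_i$ over such tuples.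
   Context: A tuple $(V_i)$ of functions $V_i:\mathbb{R}^n\to(-\infty,+\infty]$ is admissible (for $c$) if $\sum_iV_i(x_i)\ge c(x)$ for all $x=(x_1,\dots,x_N)\in(\mathbb{R}^n)^N$. $K^{\min}_d(\nu_1,\dots,\nu_N)=\inf_\pi\int d\,d\pi$ over probability measures $\pi$ on $(\mathbb{R}^n)^N$ with marginals $\nu_1,\dots,\nu_N$. $\mathrm{Ent}_\mu(\nu)=\int\rho\log\rho\,d\mu$ if $\nu=\rho\mu$, and $+\infty$ otherwise. *)

(* Defs.v *)
From HB Require Import structures.
From mathcomp Require Import all_boot all_order all_algebra.
From mathcomp Require Import all_classical all_reals all_analysis measurable_realfun.
Set Implicit Arguments. Unset Strict Implicit. Unset Printing Implicit Defensive.
Import Order.TTheory GRing.Theory Num.Theory.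
Local Open Scope classical_set_scope.
Local Open Scope ring_scope.
Local Open Scope ereal_scope.

(* Points of R^n are n-tuples of reals, equipped with the product (Borel)
   sigma-algebra generated by the coordinates; points of (R^n)^N are
   N-tuples of such. *)
Definition Rn (R : realType) (n : nat) : measurableType _ := n.-tuple R.
Definition RnN (R : realType) (n N : nat) : measurableType _ := N.-tuple (Rn R n).

(* lam is Lebesgue measure on R^n: it gives every box with measurable sides
   the product of the (one-dimensional) Lebesgue measures of its sides.
   (This determines lam uniquely on the product sigma-algebra.) *)
Definition is_lebesgue_Rn (R : realType) (n : nat)
  (lam : {measure set (Rn R n) -> \bar R}) : Prop :=
  forall A : 'I_n -> set R, (forall j, measurable (A j)) ->
    lam [set x | forall j, A j (tnth x j)] = \prod_(j < n) lebesgue_measure (A j).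

Definition admissible (R : realType) (n N : nat)
  (c : RnN R n N -> R) (V : 'I_N -> Rn R n -> \bar R) : Prop :=
  forall x : RnN R n N, (c x)%:E <= \sum_(i < N) V i (tnth x i).

Definition no_minfty (R : realType) (T : Type) (f : T -> \bar R) : Prop :=
  forall x, f x != -oo.

Definition Zpart (R : realType) (n : nat) (lam : {measure set (Rn R n) -> \bar R})
  (alpha : R) (V : Rn R n -> \bar R) : \bar R :=
  \int[lam]_x expeR (- (alpha%:E * V x)).

Definition is_coupling (R : realType) (n N : nat)
  (nu : 'I_N -> probability (Rn R n) R) (pi : probability (RnN R n N) R) : Prop :=
  forall (i : 'I_N) (A : set (Rn R n)), measurable A ->
    pi [set x | A (tnth x i)] = nu i A.

Definition Kmin (R : realType) (n N : nat) (dc : RnN R n N -> \bar R)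
  (nu : 'I_N -> probability (Rn R n) R) : \bar R :=
  ereal_inf [set \int[pi]_x dc x | pi in [set pi | is_coupling nu pi]].

Definition xlogx (R : realType) (t : R) : R := if t == 0%R then 0%R else (t * ln t)%R.

Definition is_density (R : realType) d (T : measurableType d)
  (mu nu : {measure set T -> \bar R}) (rho : T -> R) : Prop :=
  [/\ measurable_fun setT rho, (forall x, (0 <= rho x)%R) &
      forall A, measurable A -> nu A = \int[mu]_(x in A) (rho x)%:E].

Definition Ent (R : realType) d (T : measurableType d)
  (mu nu : {measure set T -> \bar R}) : \bar R :=
  match pselect (exists rho, is_density mu nu rho) with
  | left H => \int[mu]_x (xlogx (projT1 (cid H) x))%:E
  | right _ => +oo
  end.

(* Main.v *)
Require Import Defs.
From HB Require Import structures.
From mathcomp Require Import all_boot all_order all_algebra.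
From mathcomp Require Import all_classical all_reals all_analysis measurable_realfun.
From mathcomp Require Import ring lra.
Import Order.TTheory GRing.Theory Num.Theory.
Local Open Scope classical_set_scope.
Local Open Scope ring_scope.
Local Open Scope ereal_scope.
Lemma measurable_expeR (R : realType) :
  measurable_fun [set: \bar R] (@expeR R).
Proof.
have -> : @expeR R = fun x => if x \is a fin_num then (expR (fine x))%:E
   else if x == +oo then +oo else 0.
  by apply/funext => -[r| |].
apply: measurable_fun_ifT.
- apply: (measurable_fun_bool true); rewrite setTI.
  have := emeasurable_fin_num (@measurableT _ (\bar R)) (@measurable_id _ _ setT).
  by rewrite setTI.
- apply/(measurable_EFinP _ (expR \o fine)).
  apply: measurableT_comp; [exact: measurable_expR| exact: fine_measurable].
- apply: (measurable_fun_ifT (g := cst +oo) (h := cst 0)) => //.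
  apply: (measurable_fun_bool true); rewrite setTI.
  have -> : (fun x : \bar R => x == +oo) @^-1` [set true] = [set +oo].
    by apply/seteqP; split => x /= /eqP.
  exact: emeasurable_set1.
Qed.

Lemma xlogxE (R : realType) (t : R) : xlogx t = (t * ln t)%R.
Proof. by rewrite /xlogx; case: eqP => // ->; rewrite mul0r. Qed.

Section cv.
Context d (T : measurableType d) (R : realType).
Variables (mu nu : {measure set T -> \bar R}) (g : T -> \bar R).
Hypotheses (g0 : forall x, 0 <= g x) (gfin : forall x, g x \is a fin_num)
  (mg : measurable_fun setT g)
  (Hg : forall A, measurable A -> nu A = \int[mu]_(x in A) g x).

Import HBNNSimple.

Lemma cv_ge0 f E : (forall x, 0 <= f x) ->
    measurable E -> measurable_fun E f ->
  \int[mu]_(x in E) (f x * g x) = \int[nu]_(x in E) f x.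
Proof.
move=> f0 mE mf.
pose h := nnsfun_approx mE mf.
have -> : \int[nu]_(x in E) f x =
    lim (\int[nu]_(x in E) (EFin \o h n) x @[n --> \oo]).
  have fE x : E x -> f x = lim ((EFin \o h n) x @[n --> \oo]).
    by move=> Ex; apply/esym/cvg_lim => //; exact: cvg_nnsfun_approx.
  under eq_integral => x /[!inE] /fE -> //.
  apply: monotone_convergence => //.
  - move=> n; apply/measurable_EFinP.
    by apply: (measurable_funS measurableT) => //; exact/measurable_funP.
  - by move=> n x Ex //=; rewrite lee_fin.
  - by move=> x Ex a b ab; rewrite lee_fin; exact/lefP/nd_nnsfun_approx.
have -> : \int[mu]_(x in E) (f \* g) x =
    lim (\int[mu]_(x in E) ((EFin \o h n) \* g) x @[n --> \oo]).
  have fg x : E x -> f x * g x = lim (((EFin \o h n) \* g) x @[n --> \oo]).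
    by move=> Ex; apply/esym/cvg_lim => //; apply: cvgeZr;
      [exact: gfin|exact: cvg_nnsfun_approx].
  under eq_integral => x /[!inE] /fg -> //.
  apply: monotone_convergence => [//| | |].
  - move=> n; apply/emeasurable_funM; apply/measurable_funTS => //.
    exact/measurable_EFinP.
  - by move=> n x Ex /=; rewrite mule_ge0 ?lee_fin ?g0.
  - by move=> x Ex a b ab/=; rewrite lee_wpmul2r ?lee_fin ?g0//; exact/lefP/nd_nnsfun_approx.
suff suf n : \int[mu]_(x in E) ((EFin \o h n) x * g x) =
    \int[nu]_(x in E) (EFin \o h n) x.
  by under eq_fun do rewrite suf.
transitivity (\int[nu]_(x in E)
   (\sum_(y \in range (h n)) (y * \1_(h n @^-1` [set y]) x)%:E)); last first.
  by apply: eq_integral => t tE; rewrite /= fimfunE -fsumEFin.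
have indich m r : measurable_fun E (fun x => (r * \1_(h m @^-1` [set r]) x)%:E).
  by apply: (measurable_comp measurableT) => //; exact: measurable_funM.
rewrite ge0_integral_fsum//; last by move=> m y Ey; exact: nnfun_muleindic_ge0.
transitivity (\int[mu]_(x in E) (\sum_(y \in range (h n))
    (y * \1_(h n @^-1` [set y]) x)%:E * g x)).
  under [RHS]eq_integral => x xE.
    rewrite -ge0_mule_fsuml => [|y]; last exact: nnfun_muleindic_ge0.
    rewrite fsumEFin // -(fimfunE _ x); over.
  by [].
rewrite ge0_integral_fsum//; last 2 first.
  - move=> y; apply: emeasurable_funM => //; apply: measurable_funTS => //.
  - by move=> m y Ey; rewrite mule_ge0 ?g0// nnfun_muleindic_ge0.
apply: eq_fsbigr => r rhn.
under [RHS]eq_integral do rewrite EFinM.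
rewrite integralZl_indic_nnsfun => //.
under eq_integral do rewrite EFinM -muleA.
rewrite ge0_integralZl//.
- under eq_integral do rewrite muleC.
  rewrite (eq_integral (g \_ (h n @^-1` [set r]))); last first.
    by move=> x xE; rewrite epatch_indic.
  by rewrite -integral_mkcondr -Hg// integral_indic// setIC.
- apply: emeasurable_funM; first exact/measurable_EFinP.
  exact/measurable_funTS.
- by move=> t Et; rewrite mule_ge0 ?lee_fin ?g0.
- by move: rhn; rewrite inE => -[t _ <-]; rewrite lee_fin.
Qed.

Lemma cv f : measurable_fun setT f ->
  \int[mu]_x (f x * g x) = \int[nu]_x f x.
Proof.
move=> mf; rewrite integralE [RHS]integralE.
have posM (f' : T -> \bar R) x : maxe (f' x * g x) 0 = maxe (f' x) 0 * g x.
  rewrite /Order.max.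
  have [fx0|fx0] := leP 0 (f' x).
    by rewrite ltNge mule_ge0 ?g0.
  rewrite mul0e; case: ifPn => //; rewrite -leNgt => H.
  by apply/eqP; rewrite eq_le H mule_le0_ge0 ?g0// ltW.
have Pp : (fun x => f x * g x)^\+ = fun x => f^\+ x * g x.
  by apply/funext => x; rewrite !funeposE posM.
have Pn : (fun x => f x * g x)^\- = fun x => f^\- x * g x.
  by apply/funext => x; rewrite !funenegE -mulNe (posM (fun x => - f x)).
rewrite Pp Pn !cv_ge0//.
- exact: measurable_funeneg.
- exact: measurable_funepos.
Qed.

End cv.

Lemma expeR_fin (R : realType) (y : \bar R) : y != +oo -> expeR y \is a fin_num.
Proof.
move=> yoo; rewrite fin_numE expeR_eqy yoo andbT.
by apply/negP => /eqP H; have := expeR_ge0 y; rewrite H.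
Qed.

Section ent.
Context d (T : measurableType d) (R : realType).
Variables (lam : {measure set T -> \bar R}) (a zp zv : R) (P V : T -> \bar R)
  (mu nu : probability T R).
Hypotheses (a0 : (0 < a)%R) (zp0 : (0 < zp)%R) (zv0 : (0 < zv)%R)
  (mP : measurable_fun setT P) (mV : measurable_fun setT V)
  (Pfin : no_minfty P) (Vfin : no_minfty V)
  (Hmu : forall A, measurable A ->
     mu A = \int[lam]_(x in A) (expeR (- (a%:E * P x)) * (zp^-1)%:E))
  (Hnu : forall A, measurable A ->
     nu A = \int[lam]_(x in A) (expeR (- (a%:E * V x)) * (zv^-1)%:E))
  (iP : nu.-integrable setT P) (iV : nu.-integrable setT V).

Let fP x := expeR (- (a%:E * P x)) * (zp^-1)%:E.
Let fV x := expeR (- (a%:E * V x)) * (zv^-1)%:E.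
Let gP x := expeR (a%:E * P x) * zp%:E.
Let rho0 x := (fine (fV x) * fine (gP x))%R.

Let noo (W : T -> \bar R) (Wfin : no_minfty W) x : - (a%:E * W x) != +oo.
Proof.
move: (Wfin x); case: (W x) => [r| |] //= _.
by rewrite gt0_muley ?lte_fin.
Qed.

Let fV_ge0 x : 0 <= fV x.
Proof. by rewrite mule_ge0 ?expeR_ge0 ?lee_fin ?invr_ge0 ?ltW. Qed.
Let fP_ge0 x : 0 <= fP x.
Proof. by rewrite mule_ge0 ?expeR_ge0 ?lee_fin ?invr_ge0 ?ltW. Qed.
Let fV_fin x : fV x \is a fin_num.
Proof. by rewrite fin_numM ?expeR_fin ?noo. Qed.
Let fP_fin x : fP x \is a fin_num.
Proof. by rewrite fin_numM ?expeR_fin ?noo. Qed.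

Let mexp (W : T -> \bar R) (k : R) (r : R) : measurable_fun setT W ->
  measurable_fun setT (fun x => expeR (k%:E * W x) * r%:E).
Proof.
move=> mW; apply: emeasurable_funM => //.
apply: measurableT_comp; first exact: measurable_expeR.
exact: measurable_funeM.
Qed.

Let mfP : measurable_fun setT fP.
Proof.
have -> : fP = fun x => expeR ((- a)%:E * P x) * (zp^-1)%:E.
  by apply/funext => x; rewrite /fP EFinN mulNe.
exact: mexp.
Qed.
Let mfV : measurable_fun setT fV.
Proof.
have -> : fV = fun x => expeR ((- a)%:E * V x) * (zv^-1)%:E.
  by apply/funext => x; rewrite /fV EFinN mulNe.
exact: mexp.
Qed.
Let mgP : measurable_fun setT gP.
Proof. exact: mexp. Qed.

Let mrho0 : measurable_fun setT rho0.
Proof.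
apply: measurable_funM; apply: measurableT_comp => //; exact: fine_measurable.
Qed.

Let rho0_ge0 x : (0 <= rho0 x)%R.
Proof.
rewrite mulr_ge0 ?fine_ge0 ?fV_ge0 //.
by rewrite mule_ge0 ?expeR_ge0 ?lee_fin ?ltW.
Qed.

Let F := [set x | P x \is a fin_num].
Let mF : measurable F.
Proof. by have := emeasurable_fin_num measurableT mP; rewrite setTI. Qed.

Let nuF A : measurable A -> nu (A `\` F) = 0.
Proof.
move=> mA; case: (integrable_ae measurableT iP) => N [mN N0 sN].
apply/eqP; rewrite eq_le measure_ge0 andbT -N0; apply: le_measure.
- by rewrite inE; apply: measurableD.
- by rewrite inE.
by move=> x [_ Fx]; apply: sN => /(_ I).
Qed.

Let pw x : (rho0 x)%:E * fP x = fV x * (\1_F x)%:E.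
Proof.
rewrite /rho0 /fP /gP indicE.
have := Pfin x; case Px : (P x) => [p| |] //= _.
  rewrite mem_set; last by rewrite /F /= Px.
  rewrite mule1 -(fineK (fV_fin x)) -!EFinM; congr (_%:E).
  rewrite -[RHS]mulr1 -!mulrA; congr (_ * _)%R.
  have e0 := expR_gt0 (a * p).
  rewrite expRN; field; rewrite ?gt_eqF //.
rewrite memNset; last by rewrite /F /= Px.
by rewrite mule0 gt0_muley ?lte_fin // /= mul0e mule0.
Qed.

Let dens A : measurable A -> nu A = \int[mu]_(x in A) (rho0 x)%:E.
Proof.
move=> mA.
rewrite -(@cv_ge0 _ _ _ lam mu fP) //; last by apply/measurable_EFinP; exact: measurable_funTS.
under eq_integral do rewrite pw.
rewrite -__deprecated__integral_setI_indic // -Hnu; last exact: measurableI.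
have := measureDI nu mA mF.
have h := nuF A mA.
move=> ->; rewrite -[X in _ = X]add0e; congr (_ + _); exact: h.
Qed.

Lemma ent_eq : Ent mu nu = a%:E * (\int[nu]_x P x - \int[nu]_x V x)
   + (ln zp - ln zv)%:E.
Proof.
rewrite /Ent; case: pselect => [H|H]; last first.
  by exfalso; apply: H; exists rho0; split.
case: (cid H) => /= rho [mrho rho_ge0 Hrho].
have mErho0 : measurable_fun setT (EFin \o rho0) by exact/measurable_EFinP.
have irho0 : mu.-integrable setT (EFin \o rho0).
  apply/integrableP; split => //.
  under eq_integral do rewrite gee0_abs ?lee_fin //.
  by rewrite -dens // probability_setT ltry.
have ae1 : ae_eq mu setT (EFin \o rho0) (EFin \o rho).
  apply: integral_ae_eq => //; first exact/measurable_EFinP.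
  by move=> E _ mE; rewrite -dens // Hrho.
have mxl (r : T -> R) : measurable_fun setT r ->
    measurable_fun setT (fun x => (xlogx (r x))%:E).
  move=> mr; apply/(measurable_EFinP _ (fun x => xlogx (r x))).
  have -> : (fun x => xlogx (r x)) = fun x => (r x * ln (r x))%R.
    by apply/funext => x; rewrite xlogxE.
  apply: measurable_funM => //; exact: (measurableT_comp (@measurable_ln R) mr).
have -> : \int[mu]_x (xlogx (rho x))%:E = \int[mu]_x (xlogx (rho0 x))%:E.
  apply: ae_eq_integral => //; [exact: mxl|exact: mxl|].
  case: ae1 => N [mN N0 sN]; exists N; split => // x /= nx; apply: sN => /= h.
  apply: nx => _; move: (h I) => [e]; by rewrite e.
have mln : measurable_fun setT (fun x => (ln (rho0 x))%:E).
  by apply/(measurable_EFinP _ (fun x => ln (rho0 x))); exact: (measurableT_comp (@measurable_ln R) mrho0).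
have -> : \int[mu]_x (xlogx (rho0 x))%:E = \int[nu]_x (ln (rho0 x))%:E.
  rewrite -(@cv _ _ _ mu nu (EFin \o rho0)) //.
  by apply: eq_integral => x _; rewrite xlogxE EFinM muleC.
have mPV : measurable_fun setT (fun x => a%:E * (P x - V x) + (ln zp - ln zv)%:E).
  apply: emeasurable_funD => //; apply: measurable_funeM.
  exact: emeasurable_funB.
have -> : \int[nu]_x (ln (rho0 x))%:E =
    \int[nu]_x (a%:E * (P x - V x) + (ln zp - ln zv)%:E).
  apply: ae_eq_integral => //.
  case: (integrable_ae measurableT iP) => N1 [mN1 N10 s1].
  case: (integrable_ae measurableT iV) => N2 [mN2 N20 s2].
  exists (N1 `|` N2); split; first exact: measurableU.
    by rewrite measureU0.
  move=> x /= nx.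
  have [Pf|Pn] := boolP (P x \is a fin_num); last first.
    by left; apply: s1 => /(_ I); apply/negP.
  have [Vf|Vn] := boolP (V x \is a fin_num); last first.
    by right; apply: s2 => /(_ I); apply/negP.
  exfalso; apply: nx => _.
  rewrite /rho0 /fV /gP.
  move: Pf Vf; case: (P x) => // p _; case: (V x) => // v _.
  rewrite /= -EFinB -!EFinM -EFinD; congr (_%:E).
  rewrite lnM ?posrE ?mulr_gt0 ?expR_gt0 ?invr_gt0 //.
  rewrite !lnM ?posrE ?expR_gt0 ?invr_gt0 // !expRK lnV ?posrE //.
  lra.
have iPV : nu.-integrable setT (fun x => a%:E * (P x - V x)).
  by apply: integrableZl => //; exact: integrableB.
rewrite integralD //; last exact: finite_measure_integrable_cst.
rewrite integralZl //; last exact: integrableB.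
rewrite integralB // integral_cst //.
congr (_ + _); rewrite -[RHS]mule1; congr (_ * _); exact: probability_setT.
Qed.

End ent.

Lemma le_integral_lb d (T : measurableType d) (R : realType)
  (mu : {measure set T -> \bar R}) (f g : T -> \bar R) :
  mu.-integrable setT g -> measurable_fun setT f ->
  (forall x, g x <= f x) -> \int[mu]_x g x <= \int[mu]_x f x.
Proof.
move=> ig mf gf; have mg := measurable_int mu ig.
rewrite integralE [X in _ <= X]integralE; apply: leeB.
- apply: ge0_le_integral => //.
  + exact: measurable_funepos.
  + exact: measurable_funepos.
  + move=> x _; have := (funepos_le (D := setT) (f := g) (g := f)); apply; last exact: in_setT.
    by move=> y _; exact: gf.
- apply: ge0_le_integral => //.
  + exact: measurable_funeneg.
  + exact: measurable_funeneg.
  + move=> x _; have := (funeneg_le (D := setT) (f := g) (g := f)); apply; last exact: in_setT.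
    by move=> y _; exact: gf.
Qed.

Lemma lb_coup (R : realType) (n N : nat) (c : RnN R n N -> R)
  (mc : measurable_fun setT c) (Phi V : 'I_N -> Rn R n -> \bar R)
  (mPhi : forall i, measurable_fun setT (Phi i))
  (mV : forall i, measurable_fun setT (V i))
  (Phi_fin : forall i, no_minfty (Phi i))
  (V_fin : forall i, no_minfty (V i))
  (V_adm : admissible c V)
  (nu : 'I_N -> probability (Rn R n) R)
  (iV : forall i, (nu i).-integrable setT (V i))
  (iPhi : forall i, (nu i).-integrable setT (Phi i))
  (pi : probability (RnN R n N) R) (Hpi : is_coupling nu pi) :
  \sum_(i < N) (\int[nu i]_x Phi i x - \int[nu i]_x V i x)
    <= \int[pi]_x (\sum_(i < N) Phi i (tnth x i) - (c x)%:E).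
Proof.
pose h i := fun y => Phi i y - V i y.
have ih i : (nu i).-integrable setT (h i) by exact: (integrableB measurableT (iPhi i) (iV i)).
have mh i : measurable_fun setT (h i) by exact: emeasurable_funB.
have mp i : measurable_fun setT (fun x : RnN R n N => tnth x i).
  exact: measurable_tnth.
have push i A : measurable A -> nu i A = pushforward pi (fun x => tnth x i) A.
  by move=> mA; rewrite -(Hpi i A mA).
have ihp i : pi.-integrable setT (fun x => h i (tnth x i)).
  apply/integrableP; split; first exact: (measurableT_comp (mh i) (mp i)).
  have := ih i => /integrableP [_ fi].
  rewrite (eq_measure_integral (pushforward pi (fun x => tnth x i))) in fi; last first.
    by move=> A mA _; exact: push.
  have e1 : \int[pushforward pi (fun x => tnth x i)]_y `|h i y| =
      \int[pi]_x `|h i (tnth x i)|.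
    have mabs : measurable_fun setT (fun y => `|h i y|).
      exact: (measurableT_comp (@abse_measurable _ _) (mh i)).
    have := @ge0_integral_pushforward _ _ _ _ _ _ (mp i) pi setT
      (fun y => `|h i y|) measurableT mabs (fun y _ => abse_ge0 _).
    by rewrite preimage_setT.
  by rewrite -e1.
have eqi i : \int[nu i]_y h i y = \int[pi]_x h i (tnth x i).
  rewrite (eq_measure_integral (pushforward pi (fun x => tnth x i))); last first.
    by move=> A mA _; exact: push.
  have := @integral_pushforward _ _ _ _ _ _ (mp i) pi setT (h i) (mh i).
  rewrite preimage_setT; move=> -> //.
  exact: (ihp i).
have -> : \sum_(i < N) (\int[nu i]_x Phi i x - \int[nu i]_x V i x) =
    \int[pi]_x (\sum_(i < N) h i (tnth x i)).
  rewrite integral_sum //; apply: eq_bigr => i _.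
  by rewrite -eqi /h -(integralB measurableT (iPhi i) (iV i)).
apply: le_integral_lb.
- by apply: integrable_sum.
- apply: emeasurable_funB.
    apply: emeasurable_sum => i.
    exact: (measurableT_comp (mPhi i) (mp i)).
  exact/measurable_EFinP.
- move=> x.
  have [[j Vj]|allfin] := pselect (exists j, V j (tnth x j) = +oo).
    rewrite (bigD1 j) //= /h Vj.
    have -> : Phi j (tnth x j) - +oo = -oo.
      by move: (Phi_fin j (tnth x j)); case: (Phi j (tnth x j)).
    by rewrite addNye leNye.
  have Vf i : V i (tnth x i) \is a fin_num.
    rewrite fin_numE; apply/andP; split.
      exact: V_fin.
    by apply/eqP => e; apply: allfin; exists i.
  rewrite /h big_split /= fin_num_sumeN; last by move=> i _.
  by rewrite EFinN; apply: leeD2l; rewrite leeN2; exact: V_adm.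
Qed.

Theorem theorem2p4 (R : realType) (n N : nat)
  (lam : {measure set (Rn R n) -> \bar R}) (Hlam : is_lebesgue_Rn lam)
  (c : RnN R n N -> R) (mc : measurable_fun setT c)
  (alpha : 'I_N -> R) (Halpha : forall i, (0 < alpha i)%R)
  (Phi : 'I_N -> Rn R n -> \bar R)
  (mPhi : forall i, measurable_fun setT (Phi i))
  (Phi_fin : forall i, no_minfty (Phi i))
  (Phi_adm : admissible c Phi)
  (ZPhi : forall i, 0 < Zpart lam (alpha i) (Phi i) < +oo)
  (mu : 'I_N -> probability (Rn R n) R)
  (Hmu : forall i A, measurable A ->
     mu i A = \int[lam]_(x in A) (expeR (- ((alpha i)%:E * Phi i x)) *
                 ((fine (Zpart lam (alpha i) (Phi i)))^-1)%:E))
  (HT : forall nu : 'I_N -> probability (Rn R n) R,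
     Kmin (fun x => \sum_(i < N) Phi i (tnth x i) - (c x)%:E) nu
       <= \sum_(i < N) ((alpha i)^-1)%:E * Ent (mu i) (nu i)) :
  forall V : 'I_N -> Rn R n -> \bar R,
    (forall i, measurable_fun setT (V i)) ->
    (forall i, no_minfty (V i)) ->
    admissible c V ->
    (forall i, 0 < Zpart lam (alpha i) (V i) < +oo) ->
  forall nu : 'I_N -> probability (Rn R n) R,
    (forall i A, measurable A ->
       nu i A = \int[lam]_(x in A) (expeR (- ((alpha i)%:E * V i x)) *
                   ((fine (Zpart lam (alpha i) (V i)))^-1)%:E)) ->
    (forall i, (nu i).-integrable setT (V i)) ->
    (forall i, (nu i).-integrable setT (Phi i)) ->
  (\prod_(i < N) (fine (Zpart lam (alpha i) (V i))) `^ (alpha i)^-1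
     <= \prod_(i < N) (fine (Zpart lam (alpha i) (Phi i))) `^ (alpha i)^-1)%R.
Proof.
move=> V mV V_fin V_adm ZV nu Hnu iV iPhi.
pose zp i := fine (Zpart lam (alpha i) (Phi i)).
pose zv i := fine (Zpart lam (alpha i) (V i)).
have zp0 i : (0 < zp i)%R by exact: fine_gt0.
have zv0 i : (0 < zv i)%R by exact: fine_gt0.
pose r i := fine (\int[nu i]_x Phi i x - \int[nu i]_x V i x).
have rE i : (\int[nu i]_x Phi i x - \int[nu i]_x V i x) = (r i)%:E.
  by rewrite fineK // fin_numB (integrable_fin_num measurableT (iPhi i)) (integrable_fin_num measurableT (iV i)).
have Ei i : Ent (mu i) (nu i) = (alpha i)%:E * (r i)%:E + (ln (zp i) - ln (zv i))%:E.
  rewrite -rE; apply: ent_eq => //; [exact: Hmu|exact: Hnu].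
have LB : \sum_(i < N) (\int[nu i]_x Phi i x - \int[nu i]_x V i x) <=
    Kmin (fun x => \sum_(i < N) Phi i (tnth x i) - (c x)%:E) nu.
  apply/ereal_infP => y [pi Hpi <-]; exact: lb_coup.
have := le_trans LB (HT nu).
rewrite (eq_bigr (fun i => (r i)%:E)); last by move=> i _; exact: rE.
rewrite [X in _ <= X -> _](eq_bigr (fun i => ((alpha i)^-1 * ((alpha i) * r i + (ln (zp i) - ln (zv i))))%:E)); last first.
  by move=> i _; rewrite Ei.
rewrite !sumEFin lee_fin.
have -> : (\sum_(i < N) ((alpha i)^-1 * ((alpha i) * r i + (ln (zp i) - ln (zv i)))))%R
   = (\sum_(i < N) r i + \sum_(i < N) ((alpha i)^-1 * (ln (zp i) - ln (zv i))))%R.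
  rewrite -big_split /=; apply: eq_bigr => i _.
  rewrite mulrDr mulrA mulVf ?mul1r //; exact: lt0r_neq0.
rewrite lerDl => H0.
have pw (i : 'I_N) (z : R) : (0 < z)%R -> (z `^ (alpha i)^-1 = expR ((alpha i)^-1 * ln z))%R.
  by move=> z0; rewrite /powR gt_eqF.
rewrite (eq_bigr (fun i => expR ((alpha i)^-1 * ln (zv i)))); last first.
  by move=> i _; exact: (pw i _ (zv0 i)).
rewrite [X in (_ <= X)%R](eq_bigr (fun i => expR ((alpha i)^-1 * ln (zp i)))); last first.
  by move=> i _; exact: (pw i _ (zp0 i)).
rewrite -!expR_sum ler_expR -subr_ge0 -sumrB.
by under eq_bigr do rewrite -mulrBr.
Qed.
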